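(* Let $p$ be an odd prime and $\alpha>1$ any integer with $\gcd(p,\alpha)=1$. Then for all positive integers $a$, $$S_p^1(a)\leq 4\, a^{\log_p\left(\frac{p+1}{2}\right)} .$$
   Context: A base-$p$ digit $d\in\{0,\dots,p-1\}$ is called small if $d<p/2$ and large otherwise. For integers $a,n\ge1$, $S_p^n(a)=\#\{0\le s<a : \text{the base-}p\text{ representation of }\alpha^s\text{ contains fewer than } n \text{ large digits}\}$ (this depends on the fixed $\alpha$). *)

(* Defs.v *)
From Stdlib Require Import Reals Arith List Lia.

(* Base-p digits of n, least significant first (empty list for n = 0).
   [fuel] bounds the recursion; [n] itself suffices as fuel for p >= 2. *)
Fixpoint digits_aux (fuel p n : nat) : list nat :=
  match fuel with
  | O => nil
  | S f => match n with
           | O => nil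
           | _ => (n mod p) :: digits_aux f p (n / p)
           end
  end.

Definition digits (p n : nat) : list nat := digits_aux n p n.

Definition large_digit (p d : nat) : bool := Nat.leb p (2 * d).

Definition num_large_digits (p n : nat) : nat :=
  length (filter (large_digit p) (digits p n)).

Definition S_count (alpha p n a : nat) : nat :=
  length (filter (fun s => Nat.ltb (num_large_digits p (alpha ^ s)) n) (seq 0 a)).

(* Main.v *)
Require Import Defs.
From Stdlib Require Import Reals Arith List Znumtheory.
From Stdlib Require Import Lra Lia Psatz.
Open Scope R_scope.

Lemma ln_le_sub1 x : 0 < x -> ln x <= x - 1.
Proof. intros Hx. pose proof (exp_ineq1_le (ln x)). rewrite exp_ln in H; lra. Qed.

Lemma exp_le_exp x y : x <= y -> exp x <= exp y.
Proof. intros [H|H]; [left; apply exp_increasing; auto| right; subst; auto]. Qed.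

Lemma ln_le_ln x y : 0 < x -> x <= y -> ln x <= ln y.
Proof. intros Hx [H|H]; [left; apply ln_increasing; auto| right; subst; auto]. Qed.

Lemma wamgm t s : 0 < t -> 0 <= s <= 1 -> s * ln t <= ln (s * t + (1 - s)).
Proof.
  intros Ht Hs. set (m := s * t + (1 - s)).
  assert (Hm : 0 < m).
  { unfold m. destruct (Req_dec s 0) as [->|Hs0]; [lra|]. assert (0 < s * t) by (apply Rmult_lt_0_compat; lra). lra. }
  pose proof (ln_le_sub1 (t / m)) as H1. pose proof (ln_le_sub1 (/ m)) as H2.
  assert (0 < t / m) by (unfold Rdiv; apply Rmult_lt_0_compat; auto with real).
  assert (0 < / m) by auto with real.
  specialize (H1 H). specialize (H2 H0).
  unfold Rdiv in H1. rewrite ln_mult in H1 by auto. rewrite ln_Rinv in H1, H2 by auto.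
  assert (Hmm : m * / m = 1) by (field; lra).
  assert (E : s * (t * / m - 1) + (1 - s) * (/ m - 1) = 0).
  { replace (s * (t * / m - 1) + (1 - s) * (/ m - 1)) with ((s*t + (1-s)) * / m - 1) by ring. fold m. lra. }
  nra.
Qed.

Lemma jensen A s : 1 <= A -> 0 <= s <= 1 ->
  exp (s * ln A) + 1 <= 2 * exp (s * ln ((A + 1) / 2)).
Proof.
  intros HA Hs. set (m := (A + 1) / 2). assert (Hm : 0 < m) by (unfold m; lra).
  pose proof (wamgm (A / m) s) as W1. pose proof (wamgm (/ m) s) as W2.
  assert (0 < A / m) by (unfold Rdiv; apply Rmult_lt_0_compat; auto with real; lra).
  specialize (W1 H Hs). specialize (W2 (Rinv_0_lt_compat _ Hm) Hs).
  apply exp_le_exp in W1. apply exp_le_exp in W2.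
  rewrite exp_ln in W1. 2:{ destruct (Req_dec s 0) as [->|Hs0]; [lra|]. assert (0 < s * (A/m)) by (apply Rmult_lt_0_compat; lra). lra. }
  rewrite exp_ln in W2. 2:{ destruct (Req_dec s 0) as [->|Hs0]; [lra|]. assert (0 < s * (/m)) by (apply Rmult_lt_0_compat; auto with real; lra). lra. }
  unfold Rdiv in W1. rewrite ln_mult, ln_Rinv in W1 by (auto with real; lra). rewrite ln_Rinv in W2 by lra.
  rewrite Rmult_plus_distr_l, exp_plus in W1.
  assert (Hsum : s * (A * / m) + (1 - s) + (s * / m + (1 - s)) = 2).
  { replace (s * (A * / m) + (1 - s) + (s * / m + (1 - s))) with (s * ((A + 1) * / m) + 2 - 2 * s) by ring.
    unfold m. field_simplify; [lra| lra]. }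
  set (E := exp (s * - ln m)) in *.
  assert (HE : E * exp (s * ln m) = 1).
  { unfold E. rewrite <- exp_plus. replace (s * - ln m + s * ln m) with 0 by ring. apply exp_0. }
  assert (exp (s * ln A) * E + E <= 2) by lra.
  assert (0 < exp (s * ln m)) by apply exp_pos.
  assert (K : (exp (s * ln A) * E + E) * exp (s * ln m) <= 2 * exp (s * ln m)) by (apply Rmult_le_compat_r; lra).
  replace ((exp (s * ln A) * E + E) * exp (s * ln m)) with ((exp (s * ln A) + 1) * (E * exp (s * ln m))) in K by ring.
  rewrite HE in K. lra.
Qed.

Lemma ln_div x y : 0 < x -> 0 < y -> ln (x / y) = ln x - ln y.
Proof. intros. unfold Rdiv. rewrite ln_mult, ln_Rinv; auto with real. Qed.

Lemma exp1_ge : 5/2 <= exp 1.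
Proof.
  assert (He : 7/6 < exp (1/6)) by (pose proof (exp_ineq1 (1/6)); lra).
  replace 1 with (1/6+1/6+1/6+1/6+1/6+1/6) by field.
  rewrite !exp_plus. set (e := exp (1/6)) in *.
  assert ((7/6)^6 <= e^6) by (apply pow_incr; lra).
  replace (e*e*e*e*e*e) with (e^6) by ring. simpl in H. lra.
Qed.

Lemma lnhalf_odd k : ln ((2 * INR k + 5) / 2) <= (2 * INR k + 4) / 4.
Proof.
  induction k.
  - simpl. replace ((2*0+5)/2) with (5/2) by field.
    replace ((2*0+4)/4) with 1 by field.
    rewrite <- (ln_exp 1). apply ln_le_ln; [lra|apply exp1_ge].
  - rewrite S_INR.
    assert (0 <= INR k) by apply pos_INR.
    replace ((2 * (INR k + 1) + 5) / 2) with ((2 * INR k + 5) / 2 * ((2*INR k + 7)/(2*INR k+5))) by (field; lra).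
    rewrite ln_mult by (apply Rdiv_lt_0_compat; lra).
    pose proof (ln_le_sub1 ((2*INR k + 7)/(2*INR k+5))) as L.
    set (y := (2*INR k + 7)/(2*INR k+5)) in *.
    assert (Hy : y * (2*INR k+5) = 2*INR k + 7) by (unfold y; field; lra).
    assert (y <= 3/2) by nra.
    assert (0 < y) by nra.
    specialize (L H1). lra.
Qed.

Lemma lnhalf (p : nat) : (3 <= p)%nat -> Nat.Odd p -> ln (INR p / 2) <= (INR p - 1) / 4.
Proof.
  intros Hp [k Hk]. subst p. destruct k as [|[|k]]; try lia.
  - simpl. replace ((1+1+1)/2) with (1 + /2) by field.
    pose proof (ln_le_sub1 (1 + /2)). lra.
  - replace (2 * S (S k) + 1)%nat with (k + (k + 5))%nat by lia.
    rewrite !plus_INR. replace (INR 5) with 5 by (simpl; lra).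
    pose proof (lnhalf_odd k). replace (INR k + (INR k + 5)) with (2 * INR k + 5) by ring. lra.
Qed.

Lemma endpoint (p h : nat) : (3 <= p)%nat -> Nat.Odd p -> (2 * h = p + 1)%nat ->
  ln (INR p) - 2 * ln 2 <= ln (INR h) / ln (INR p) * ln (INR h - 1).
Proof.
  intros Hp Ho Hh.
  assert (HP : 3 <= INR p) by (replace 3 with (INR 3) by (simpl; lra); apply le_INR; auto).
  assert (HH : 2 * INR h = INR p + 1) by (replace 2 with (INR 2) by (simpl; lra); rewrite <- mult_INR, Hh, plus_INR; simpl; lra).
  set (P := INR p) in *. set (H := INR h) in *.
  pose proof (lnhalf p Hp Ho) as LX. fold P in LX.
  rewrite ln_div in LX by lra.
  set (X := ln P - ln 2) in *.
  assert (lnP : 0 < ln P) by (rewrite <- ln_1; apply ln_increasing; lra).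
  assert (X0 : 0 < X) by (unfold X; apply Rlt_0_minus; apply ln_increasing; lra).
  assert (LH : X <= ln H) by (unfold X; rewrite <- ln_div by lra; apply ln_le_ln; lra).
  assert (LA0 : 0 <= ln (H - 1)) by (rewrite <- ln_1; apply ln_le_ln; lra).
  assert (LA : X - 1/(P-1) <= ln (H - 1)).
  { replace (H - 1) with ((P - 1) / 2) by lra. rewrite ln_div by lra.
    pose proof (ln_le_sub1 (P / (P - 1))) as L. rewrite ln_div in L by lra.
    assert (E : P / (P - 1) - 1 = 1 / (P - 1)) by (field; intro; lra). assert (0 < P / (P - 1)) by (apply Rdiv_lt_0_compat; lra). specialize (L H0). unfold X. lra. }
  pose proof ln_lt_2 as L2.
  set (w := 1 / (P - 1)) in *.
  assert (Hw : w * (P - 1) = 1) by (unfold w; field; lra).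
  assert (Xw : X * w <= 1/4) by nra.
  assert (K : (ln P - 2 * ln 2) * ln P <= ln H * ln (H - 1)).
  { assert (X * ln (H-1) <= ln H * ln (H - 1)) by nra.
    assert (X * (X - w) <= X * ln (H-1)) by nra.
    replace (ln P) with (X + ln 2) by (unfold X; ring). nra. }
  unfold Rdiv. apply (Rmult_le_reg_r (ln P)); auto.
  replace (ln H * / ln P * ln (H - 1) * ln P) with (ln H * ln (H - 1)) by (field; lra). lra.
Qed.

Lemma key (p h r : nat) : (3 <= p)%nat -> Nat.Odd p -> (2 * h = p + 1)%nat ->
  (1 <= r)%nat -> (r <= h - 1)%nat ->
  (INR r + 1) * (INR p / INR h) <= 4 * Rpower (INR r) (ln (INR h) / ln (INR p)).
Proof.
  intros Hp Ho Hh Hr1 Hr2.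
  assert (HP : 3 <= INR p) by (replace 3 with (INR 3) by (simpl; lra); apply le_INR; auto).
  assert (HH : 2 * INR h = INR p + 1) by (replace 2 with (INR 2) by (simpl; lra); rewrite <- mult_INR, Hh, plus_INR; simpl; lra).
  assert (HR1 : 1 <= INR r) by (replace 1 with (INR 1) by (simpl; lra); apply le_INR; auto).
  assert (HR2 : INR r <= INR h - 1).
  { replace 1 with (INR 1) by (simpl; lra). rewrite <- minus_INR by lia. apply le_INR; auto. }
  set (P := INR p) in *. set (H := INR h) in *. set (R := INR r) in *.
  set (lam := ln H / ln P).
  assert (lnP : 0 < ln P) by (rewrite <- ln_1; apply ln_increasing; lra).
  assert (lnR : 0 <= ln R) by (rewrite <- ln_1; apply ln_le_ln; lra).
  assert (G : ln (R + 1) + ln P - ln H <= 2 * ln 2 + lam * ln R).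
  { assert (PH : ln P - ln H <= ln 2).
    { rewrite <- ln_div by lra. apply ln_le_ln. apply Rdiv_lt_0_compat; lra.
      set (y := P / H). assert (y * H = P) by (unfold y; field; lra). nra. }
    destruct (Nat.eq_dec h 2) as [E|E].
    - assert (r = 1)%nat by lia. subst r. unfold R in *. simpl INR in *. rewrite ln_1.
      assert (P = 3) by (unfold H in *; rewrite E in HH; simpl in HH; lra).
      replace (1+1) with 2 by ring. rewrite Rmult_0_r, Rplus_0_r.
      assert (ln P <= 2 * ln 2).
      { replace (2 * ln 2) with (ln 2 + ln 2) by ring; rewrite <- ln_mult by lra. apply ln_le_ln; lra. }
      lra.
    - assert (HA : 2 <= H - 1).
      { assert (3 <= h)%nat by lia. unfold H. replace 2 with (INR 3 - 1) by (simpl; lra).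
        apply Rplus_le_compat_r. apply le_INR; auto. }
      assert (lnA : 0 < ln (H - 1)) by (rewrite <- ln_1; apply ln_increasing; lra).
      set (s := ln R / ln (H - 1)).
      assert (Hs0 : 0 <= s) by (unfold s; unfold Rdiv; apply Rmult_le_pos; [lra | left; apply Rinv_0_lt_compat; lra]).
      assert (Hs1 : s <= 1).
      { unfold s. assert (ln R <= ln (H - 1)) by (apply ln_le_ln; lra).
        set (y := ln R / ln (H-1)). assert (y * ln (H-1) = ln R) by (unfold y; field; lra). nra. }
      assert (Es : s * ln (H - 1) = ln R) by (unfold s; field; lra).
      pose proof (jensen (H - 1) s ltac:(lra) (conj Hs0 Hs1)) as J.
      rewrite Es, exp_ln in J by lra.
      replace ((H - 1 + 1) / 2) with (H / 2) in J by field.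
      assert (J2 : ln (R + 1) <= ln 2 + s * (ln H - ln 2)).
      { apply ln_le_ln in J; [|lra]. rewrite ln_mult in J by (try lra; apply exp_pos).
        rewrite ln_exp, ln_div in J by lra. lra. }
      pose proof (endpoint p h Hp Ho Hh) as EP. fold P H in EP. fold lam in EP.
      assert (lam * ln R = s * (lam * ln (H - 1))) by (rewrite <- Es; ring).
      assert (s * (ln P - 2 * ln 2) <= s * (lam * ln (H - 1))) by (apply Rmult_le_compat_l; lra).
      assert (0 <= (1 - s) * (ln 2 - (ln P - ln H))) by (apply Rmult_le_pos; lra).
      nra. }
  assert (Hpos : 0 < (R + 1) * (P / H)) by (apply Rmult_lt_0_compat; [lra| apply Rdiv_lt_0_compat; lra]).
  rewrite <- (exp_ln _ Hpos). rewrite ln_mult, ln_div by (try apply Rdiv_lt_0_compat; lra).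
  unfold Rpower. fold lam.
  replace 4 with (exp (2 * ln 2)).
  2:{ replace (2 * ln 2) with (ln 2 + ln 2) by ring. rewrite exp_plus, exp_ln by lra. ring. }
  rewrite <- exp_plus. apply exp_le_exp. lra.
Qed.

Section S.
Variables p h : nat.
Hypothesis Hp : (3 <= p)%nat.
Hypothesis Ho : Nat.Odd p.
Hypothesis Hh : (2 * h = p + 1)%nat.

Let lam := ln (INR h) / ln (INR p).

Lemma basics : 3 <= INR p /\ 2 * INR h = INR p + 1 /\ 0 < ln (INR p) /\ 0 <= lam /\ lam * ln (INR p) = ln (INR h).
Proof.
  assert (HP : 3 <= INR p) by (replace 3 with (INR 3) by (simpl; lra); apply le_INR; auto).
  assert (HH : 2 * INR h = INR p + 1) by (replace 2 with (INR 2) by (simpl; lra); rewrite <- mult_INR, Hh, plus_INR; simpl; lra).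
  assert (lnP : 0 < ln (INR p)) by (rewrite <- ln_1; apply ln_increasing; lra).
  assert (lnH : 0 <= ln (INR h)) by (rewrite <- ln_1; apply ln_le_ln; lra).
  repeat split; auto.
  - unfold lam, Rdiv. apply Rmult_le_pos; auto. left; apply Rinv_0_lt_compat; auto.
  - unfold lam. field. lra.
Qed.

Lemma L1 (y : nat) : (1 <= y)%nat -> (y <= p)%nat ->
  INR y <= INR p / INR h * Rpower (INR y) lam.
Proof.
  intros H1 H2. destruct basics as (HP & HH & lnP & lam0 & Elam).
  assert (Y1 : 1 <= INR y) by (replace 1 with (INR 1) by (simpl; lra); apply le_INR; auto).
  assert (Y2 : INR y <= INR p) by (apply le_INR; auto).
  set (P := INR p) in *. set (H := INR h) in *. set (Y := INR y) in *.
  assert (lnY : ln Y <= ln P) by (apply ln_le_ln; lra).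
  assert (lam1 : lam <= 1).
  { assert (ln H <= ln P) by (apply ln_le_ln; lra). nra. }
  assert (Hpos : 0 < P / H) by (apply Rdiv_lt_0_compat; lra).
  rewrite <- (exp_ln Y) at 1 by lra.
  rewrite <- (exp_ln (P / H)) by auto. unfold Rpower. rewrite <- exp_plus.
  apply exp_le_exp. rewrite ln_div by lra.
  assert ((1 - lam) * ln Y <= (1 - lam) * ln P) by (apply Rmult_le_compat_l; lra).
  nra.
Qed.

Lemma rho_le2 : INR p / INR h <= 2.
Proof.
  destruct basics as (HP & HH & _).
  set (y := INR p / INR h). assert (y * INR h = INR p) by (unfold y; field; lra). nra.
Qed.

Lemma final_small (a : nat) : (1 <= a)%nat -> (a <= p)%nat -> INR a <= 4 * Rpower (INR a) lam.
Proof.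
  intros. pose proof (L1 a H H0). pose proof rho_le2.
  assert (0 < Rpower (INR a) lam) by (unfold Rpower; apply exp_pos).
  assert (0 < INR p / INR h) by (destruct basics as (HP & HH & _); apply Rdiv_lt_0_compat; lra).
  nra.
Qed.

Lemma final_big (a d m r : nat) : (1 <= d)%nat -> (d <= p)%nat -> (1 <= r)%nat ->
  (r * d * p ^ m <= a)%nat ->
  INR (d * h ^ m * Nat.min h (r + 1)) <= 4 * Rpower (INR a) lam.
Proof.
  intros Hd1 Hd2 Hr Ha. destruct basics as (HP & HH & lnP & lam0 & Elam).
  assert (h2 : (2 <= h)%nat) by lia.
  assert (Hc : INR (Nat.min h (r + 1)) * (INR p / INR h) <= 4 * Rpower (INR r) lam).
  { destruct (Compare_dec.le_lt_dec r (h - 1)) as [Hle|Hlt].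
    - rewrite Nat.min_r by lia. rewrite plus_INR. simpl (INR 1). apply key; auto.
    - rewrite Nat.min_l by lia. pose proof (key p h (h - 1) Hp Ho Hh ltac:(lia) ltac:(lia)) as K.
      rewrite minus_INR in K by lia. simpl (INR 1) in K. replace (INR h - 1 + 1) with (INR h) in K by ring.
      fold lam in K.
      assert (Rpower (INR h - 1) lam <= Rpower (INR r) lam).
      { apply Rle_Rpower_l; auto. split; [lra|].
        replace 1 with (INR 1) by (simpl; lra). rewrite <- minus_INR by lia. apply le_INR; lia. }
      lra. }
  pose proof (L1 d Hd1 Hd2) as Ld.
  assert (Hpm : Rpower (INR (p ^ m)) lam = INR h ^ m).
  { rewrite pow_INR. unfold Rpower. rewrite ln_pow by lra.
    replace (lam * (INR m * ln (INR p))) with (INR m * ln (INR h)) by (rewrite <- Elam; ring).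
    rewrite <- (Rpower_pow m (INR h)) by lra. reflexivity. }
  assert (Hr0 : 0 < INR r) by (replace 0 with (INR 0) by reflexivity; apply lt_INR; lia).
  assert (Hd0 : 0 < INR d) by (replace 0 with (INR 0) by reflexivity; apply lt_INR; lia).
  assert (Hp0 : 0 < INR (p ^ m)) by (replace 0 with (INR 0) by reflexivity; apply lt_INR; apply Nat.neq_0_lt_0, Nat.pow_nonzero; lia).
  assert (Hmono : Rpower (INR (r * d * p ^ m)) lam <= Rpower (INR a) lam).
  { apply Rle_Rpower_l; auto. split.
    - rewrite !mult_INR. repeat apply Rmult_lt_0_compat; auto.
    - apply le_INR; auto. }
  rewrite !mult_INR in Hmono. rewrite <- !Rpower_mult_distr in Hmono by (try apply Rmult_lt_0_compat; auto).
  rewrite Hpm in Hmono.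
  rewrite !mult_INR, pow_INR.
  set (c := INR (Nat.min h (r + 1))) in *.
  assert (c0 : 0 <= c) by apply pos_INR.
  assert (hm0 : 0 <= INR h ^ m) by (apply pow_le; lra).
  assert (rd0 : 0 < Rpower (INR d) lam) by (unfold Rpower; apply exp_pos).
  assert (rr0 : 0 < Rpower (INR r) lam) by (unfold Rpower; apply exp_pos).
  set (D := Rpower (INR d) lam) in *. set (Rr := Rpower (INR r) lam) in *.
  set (Hm := INR h ^ m) in *. set (rho := INR p / INR h) in *.
  assert (S1 : INR d * Hm * c <= rho * D * Hm * c).
  { apply Rmult_le_compat_r; auto. apply Rmult_le_compat_r; auto. }
  assert (S2 : rho * D * Hm * c <= D * Hm * (4 * Rr)).
  { replace (rho * D * Hm * c) with (D * Hm * (c * rho)) by ring.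
    apply Rmult_le_compat_l; auto. apply Rmult_le_pos; lra. }
  lra.
Qed.
End S.

Module Comb.
From mathcomp Require Import all_boot zify.
From Stdlib Require Import ArithRing.
From Stdlib Require PeanoNat List ZArith Znumtheory Lia.
Ltac nring := rewrite ?expnS ?expn0 /addn /muln /=; ring.
Local Close Scope R_scope.
Local Open Scope nat_scope.
Local Set Implicit Arguments. Local Unset Strict Implicit. Local Unset Printing Implicit Defensive.

Lemma binom_ex n y : exists z, (1 + y) ^ n = 1 + n * y + 'C(n, 2) * y ^ 2 + z * y ^ 3.
Proof.
  elim: n => [|n [z IH]]; first by exists 0; rewrite bin0n.
  exists ('C(n, 2) + z + z * y). rewrite expnS IH binS bin1. nring.
Qed.

Lemma binom_ex2 n y : exists w, (1 + y) ^ n = 1 + n * y + w * y ^ 2.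
Proof. have [z ->] := binom_ex n y. exists ('C(n,2) + z * y). nring. Qed.

Lemma alg_id p Q u c z : 1 + p * (p * Q * u) + c * p * (p * Q * u) ^ 2 + z * (p * Q * u) ^ 3 =
  1 + p * (p * Q) * (u + p * (c * Q * u ^ 2 + z * (Q * Q) * u ^ 3)).
Proof. nring. Qed.

Section Comb.
Variables (p : nat).
Hypothesis pP : prime p.
Hypothesis p_odd : odd p.

Lemma p_gt1 : 1 < p. Proof. exact: prime_gt1. Qed.

Lemma p_gt2 : 2 < p.
Proof. have := p_gt1. have := p_odd. case: p => [|[|[|q]]] //. Qed.

Lemma lte_step k u : 0 < k -> ~~ (p %| u) ->
  exists u', (1 + p ^ k * u) ^ p = 1 + p ^ k.+1 * u' /\ ~~ (p %| u').
Proof.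
  move=> k0 pu.
  have [z E] := binom_ex p (p ^ k * u).
  have dC : p %| 'C(p, 2) by apply: prime_dvd_bin => //; rewrite /= p_gt2.
  have [c Ec] := dvdnP dC.
  have ek : p ^ k = p * p ^ (k - 1) by rewrite -expnS subn1 prednK.
  set Q := p ^ (k - 1) in ek.
  exists (u + p * (c * Q * u ^ 2 + z * (Q * Q) * u ^ 3)).
  split.
  - by rewrite E Ec (expnS p k) ek alg_id.
  - by rewrite dvdn_addl // dvdn_mulr.
Qed.

Variable alpha : nat.
Hypothesis p_ndvd : ~~ (p %| alpha).
Hypothesis alpha_gt1 : 1 < alpha.

Definition d := p.-1.
Lemma d_gt0 : 0 < d. Proof. rewrite /d. have := p_gt2. lia. Qed.

Lemma cop_alpha : coprime p alpha. Proof. by rewrite prime_coprime. Qed.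

Lemma fermat1 : p %| alpha ^ d - 1.
Proof.
  have F := fermat_little alpha pP.
  have Ep : p = d.+1 by rewrite /d prednK // ltnW // p_gt1.
  move: F; rewrite {1}Ep expnSr => /eqP.
  rewrite -{3}(mul1n alpha) eqn_mod_dvd; last first.
    by apply: leq_mul => //; rewrite expn_gt0 ltnW.
  by rewrite -mulnBl Gauss_dvdl // cop_alpha.
Qed.

Definition beta := alpha ^ d.
Lemma beta_gt1 : 1 < beta.
Proof. rewrite /beta. have := d_gt0. case: d => // n _. rewrite expnS. have := expn_gt0 alpha n. nia. Qed.

Definition t := logn p (beta - 1).

Lemma t_gt0 : 0 < t.
Proof.
  rewrite /t -(pfactor_dvdn 1 pP); last by have := beta_gt1; lia.
  by rewrite expn1 fermat1.
Qed.

Lemma u0_ex : exists u, beta = 1 + p ^ t * u /\ ~~ (p %| u).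
Proof.
  have b0 : 0 < beta - 1 by have := beta_gt1; lia.
  have [u cu Eu] := pfactor_coprime pP b0.
  exists u. split; last by rewrite -prime_coprime.
  rewrite /t mulnC -Eu. have := beta_gt1. lia.
Qed.

Lemma lte m : exists u, alpha ^ (d * p ^ m) = 1 + p ^ (t + m) * u /\ ~~ (p %| u).
Proof.
  elim: m => [|m [u [Eu pu]]].
  - rewrite expn0 muln1 addn0. exact: u0_ex.
  - have [u' [E' pu']] := lte_step (ltn_addr m t_gt0) pu.
    exists u'. split => //.
    by rewrite expnS mulnCA mulnC expnM Eu E' addnS.
Qed.

Lemma lift_form m : exists u, ~~ (p %| u) /\ forall s e, exists w,
  alpha ^ (s + e * (d * p ^ m)) = alpha ^ s + (alpha ^ s * e * u) * p ^ (t + m) + w * p ^ (t + m).+1.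
Proof.
  have [u [Eu pu]] := lte m.
  exists u; split => // s e.
  have [w Ew] := binom_ex2 e (p ^ (t + m) * u).
  have k0 : 0 < t + m := ltn_addr m t_gt0.
  have ek : p ^ (t + m) = p * p ^ (t + m - 1) by rewrite -expnS subn1 prednK.
  exists (alpha ^ s * w * p ^ (t + m - 1) * u ^ 2).
  rewrite expnD (mulnC e) expnM Eu Ew (expnS p (t + m)) ek.
  move: (p ^ (t + m - 1)) => Q. nring.
Qed.


Definition dig n i := n %/ p ^ i %% p.

Lemma dig_mod X Y K i : X = Y %[mod p ^ K] -> i < K -> dig X i = dig Y i.
Proof.
  move=> E iK. rewrite /dig !modn_divl -expnS.
  have dv : p ^ i.+1 %| p ^ K by rewrite dvdn_exp2l.
  by rewrite -(modn_dvdm X dv) -(modn_dvdm Y dv) E.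
Qed.

Lemma dig_high Y W k : dig (Y + W * p ^ k.+1) k = dig Y k.
Proof. apply: (dig_mod (K := k.+1)) => //. by rewrite addnC modnMDl. Qed.

Lemma dig_low Y W k i : i < k -> dig (Y + W * p ^ k) i = dig Y i.
Proof. move=> ik. apply: (dig_mod (K := k)) => //. by rewrite addnC modnMDl. Qed.

Lemma dig_shift Y Z k : dig (Y + Z * p ^ k) k = (dig Y k + Z) %% p.
Proof.
  rewrite /dig addnC divnMDl ?expn_gt0 ?prime_gt0 //.
  by rewrite modnDml addnC.
Qed.

Definition Pm m s := all (fun i => 2 * dig (alpha ^ s) (t + i) < p) (iota 0 m).

Definition M m := d * p ^ m.

Lemma Pm_per m s e : Pm m (s + e * M m) = Pm m s.
Proof.
  have [u [pu H]] := lift_form m.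
  have [w Ew] := H s e.
  apply: eq_in_all => i; rewrite mem_iota add0n => im.
  rewrite /M Ew -addnA.
  have -> : alpha ^ s * e * u * p ^ (t + m) + w * p ^ (t + m).+1 = (alpha ^ s * e * u + w * p) * p ^ (t + m)
    by rewrite expnS; move: (p ^ (t + m)) => Q; nring.
  rewrite dig_low //.
  by rewrite ltn_add2l.
Qed.

Lemma Pm_S m x : Pm m.+1 x = Pm m x && (2 * dig (alpha ^ x) (t + m) < p).
Proof. by rewrite /Pm -(addn1 m) iotaD all_cat /= andbT. Qed.

Definition h := p.+1./2.

Lemma h2 : h.*2 = p.+1.
Proof. by rewrite /h halfK /= p_odd subn0. Qed.

Lemma inj_mod D c x y : coprime p c -> x < p -> y < p ->
  (D + x * c) %% p = (D + y * c) %% p -> x = y.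
Proof.
  move=> cc.
  wlog xy : x y / x <= y.
    move=> W xp yp E. case: (leqP x y) => [xy|yx]; first exact: W.
    symmetry. apply: W => //. exact: ltnW.
  move=> xp yp /eqP E. rewrite eq_sym eqn_mod_dvd in E; last by rewrite leq_add2l leq_mul2r xy orbT.
  rewrite subnDl -mulnBl Gauss_dvdl // in E.
  case: (posnP (y - x)) => [|pos]; first by lia.
  have := dvdn_leq pos E. lia.
Qed.

Lemma cnt_h D c : coprime p c ->
  count (fun e => 2 * ((D + e * c) %% p) < p) (iota 0 p) <= h.
Proof.
  move=> cc. rewrite -size_filter.
  set s := filter _ _.
  rewrite -(size_map (fun e => (D + e * c) %% p)) -{1}(size_iota 0 h).
  apply: uniq_leq_size.
  - rewrite map_inj_in_uniq; first by rewrite filter_uniq // iota_uniq.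
    move=> x y; rewrite !mem_filter !mem_iota /= => /andP[_ xp] /andP[_ yp].
    exact: inj_mod.
  - move=> z /mapP [e]; rewrite mem_filter => /andP [He _] ->.
    rewrite mem_iota /= add0n. have := h2. lia.
Qed.

Lemma dig_step m : exists c, coprime p c /\ forall s e,
  dig (alpha ^ (s + e * M m)) (t + m) = (dig (alpha ^ s) (t + m) + e * (alpha ^ s * c)) %% p.
Proof.
  have [u [pu H]] := lift_form m.
  exists u; split; first by rewrite prime_coprime.
  move=> s e. have [w Ew] := H s e.
  by rewrite /M Ew dig_high dig_shift mulnCA mulnA.
Qed.

Lemma lift_count m s q : q <= p ->
  count (fun e => Pm m.+1 (s + e * M m)) (iota 0 q) <= Pm m s * minn h q.
Proof.
  move=> qp. case Ps: (Pm m s).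
  - rewrite mul1n leq_min; apply/andP; split; last by rewrite (leq_trans (count_size _ _)) ?size_iota.
    have [c [cc Hc]] := dig_step m.
    apply: (@leq_trans (count (fun e => 2 * dig (alpha ^ (s + e * M m)) (t + m) < p) (iota 0 p))).
    + apply: (@leq_trans (count (fun e => 2 * dig (alpha ^ (s + e * M m)) (t + m) < p) (iota 0 q))).
      * apply: sub_count => e /=. by rewrite Pm_S => /andP [].
      * by rewrite -(subnKC qp) iotaD count_cat leq_addr.
    + rewrite (eq_count (a2 := fun e => 2 * ((dig (alpha ^ s) (t + m) + e * (alpha ^ s * c)) %% p) < p)); last first.
        by move=> e /=; rewrite Hc.
      apply: cnt_h. by rewrite coprimeMr cc andbT coprimeXr // cop_alpha.
  - rewrite mul0n leqn0. apply/eqP.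
    rewrite (eq_count (a2 := pred0)) ?count_pred0 // => e.
    by rewrite /= Pm_S Pm_per Ps.
Qed.

Lemma sum_count (a : pred nat) q : \sum_(0 <= e < q) (a e : nat) = count a (iota 0 q).
Proof.
  elim: q => [|q IH]; first by rewrite big_geq.
  rewrite big_nat_recr // IH -(addn1 q) iotaD count_cat /=. by rewrite addn0.
Qed.

Lemma sum_split (f : nat -> nat) q K :
  \sum_(0 <= x < q * K) f x = \sum_(0 <= s < K) \sum_(0 <= e < q) f (s + e * K).
Proof.
  elim: q => [|q IH].
  - rewrite mul0n big_geq // big1 // => s _. by rewrite big_geq.
  - rewrite mulSnr (@big_cat_nat _ _ _ (q * K)) ?leq_addr //= IH.
    rewrite -{1}(add0n (q * K)) big_addn addKn.
    rewrite -big_split /=. apply: eq_bigr => s _.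
    by rewrite big_nat_recr //= addnC.
Qed.

Definition N m a := \sum_(0 <= s < a) (Pm m s : nat).

Lemma N_mono m a b : a <= b -> N m a <= N m b.
Proof. move=> ab. by rewrite /N (@big_cat_nat _ _ _ a 0 b) //= leq_addr. Qed.

Lemma N_step m q : q <= p -> N m.+1 (q * M m) <= N m (M m) * minn h q.
Proof.
  move=> qp. rewrite /N sum_split big_distrl /=.
  apply: leq_sum => s _. rewrite sum_count. exact: lift_count.
Qed.

Lemma h_le_p : h <= p.
Proof. have := h2. have := p_gt2. lia. Qed.

Lemma N_bound m : N m (M m) <= d * h ^ m.
Proof.
  elim: m => [|m IH].
  - rewrite /N /M expn0 !muln1. rewrite (eq_bigr (fun _ => 1)) //.
    by rewrite sum_nat_const_nat subn0 muln1.
  - have E : M m.+1 = p * M m by rewrite /M expnS mulnCA.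
    rewrite E. apply: (leq_trans (N_step m (leqnn p))).
    rewrite (minn_idPl h_le_p) expnS mulnCA mulnC.
    by rewrite leq_mul2l IH orbT.
Qed.

Lemma M_pos m : 0 < M m.
Proof. by rewrite /M muln_gt0 d_gt0 expn_gt0 prime_gt0. Qed.

Lemma main_comb a : d < a -> exists m q, [/\ 2 <= q, q <= p, (q - 1) * M m < a &
  N m.+1 a <= d * h ^ m * minn h q].
Proof.
  move=> da.
  have exm : exists m, a <= M m.+1.
  { exists a. rewrite /M.
    have H1 : a < p ^ a.+1 := ltn_trans (ltnSn a) (ltn_expl _ p_gt1).
    apply: (leq_trans (ltnW H1)). exact: leq_pmull d_gt0. }
  case: (ex_minnP exm) => m am minm.
  have Mm : M m < a.
  { case: m am minm => [|k] am minm; first by rewrite /M expn0 muln1.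
    rewrite ltnNge. apply/negP => H. have := minm k H. lia. }
  have exq : exists q, a <= q * M m.
  { exists p. by rewrite /M mulnCA -expnS. }
  case: (ex_minnP exq) => q aq minq.
  have qp : q <= p. { apply: minq. by rewrite /M mulnCA -expnS. }
  have q2 : 2 <= q.
  { case: q aq minq {qp} => [|[|q]] aq _ //.
    - rewrite mul0n in aq. lia.
    - rewrite mul1n in aq. lia. }
  exists m, q. split => //.
  - case: q aq minq {qp} q2 => [|q] aq minq q2 //.
    rewrite subn1 /= ltnNge. apply/negP => H. have := minq q H. lia.
  - apply: (leq_trans (N_mono m.+1 aq)). apply: (leq_trans (N_step m qp)).
    by rewrite leq_mul2r N_bound orbT.
Qed.

Lemma divE n k : 0 < k -> n %/ k = Nat.div n k.
Proof.
  move=> k0. apply: PeanoNat.Nat.div_unique; last by rewrite {1}(divn_eq n k) mulnC.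
  apply/ltP. by rewrite ltn_pmod.
Qed.

Lemma modE n k : 0 < k -> n %% k = Nat.modulo n k.
Proof.
  move=> k0. apply: (PeanoNat.Nat.mod_unique _ _ (n %/ k)); last by rewrite {1}(divn_eq n k) mulnC.
  apply/ltP. by rewrite ltn_pmod.
Qed.

Lemma digits_in f n i : n <= f -> dig n i = 0 \/ List.In (dig n i) (digits_aux f p n).
Proof.
  elim: f n i => [|f IH] n i nf.
  - left. have -> : n = 0 by lia. by rewrite /dig div0n mod0n.
  - case: n nf => [|n] nf; first by left; rewrite /dig div0n mod0n.
    have p0 : 0 < p by exact: prime_gt0.
    rewrite [digits_aux _ _ _]/= -(modE _ p0) -(divE _ p0).
    case: i => [|i].
    + right. left. by rewrite /dig expn0 divn1.
    + have E : dig n.+1 i.+1 = dig (n.+1 %/ p) i by rewrite /dig expnS divnMA.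
      rewrite E.
      have : n.+1 %/ p <= f.
      { have := ltn_Pdiv p_gt1 (ltn0Sn n). lia. }
      move=> /(IH _ i) [->|H]; [by left | right; right; exact: H].
Qed.

Lemma good_dig n : num_large_digits p n = 0 -> forall i, 2 * dig n i < p.
Proof.
  move=> H i. have p0 : 0 < p by exact: prime_gt0.
  case: (digits_in i (leqnn n)) => [->|Hin]; first by rewrite muln0.
  move: H; rewrite /num_large_digits => /List.length_zero_iff_nil H.
  case E: (large_digit p (dig n i)).
  - have : List.In (dig n i) (List.filter (large_digit p) (digits p n)) by apply/List.filter_In.
    by rewrite H.
  - move: E; rewrite /large_digit => /PeanoNat.Nat.leb_gt /ltP. by [].
Qed.

Lemma powE a s : Nat.pow a s = a ^ s.
Proof. elim: s => [|s IH] //=. by rewrite IH expnS. Qed.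

Lemma filter_len (f : nat -> bool) a :
  length (List.filter f (List.seq 0 a)) = \sum_(0 <= s < a) (f s : nat).
Proof.
  elim: a => [|a IH]; first by rewrite big_geq.
  rewrite List.seq_S List.filter_app List.length_app IH big_nat_recr //=.
  by case: (f a).
Qed.

Lemma S_le_N m a : S_count alpha p 1 a <= N m a.
Proof.
  rewrite /S_count filter_len. apply: leq_sum => s _.
  case G: (Nat.ltb _ _) => //.
  have H0 : num_large_digits p (Nat.pow alpha s) = 0.
  { move: G => /PeanoNat.Nat.ltb_lt. lia. }
  rewrite powE in H0.
  have -> : Pm m s. { apply/allP => i _. exact: good_dig. }
  by [].
Qed.

End Comb.

Lemma prime_of_Z p : Znumtheory.prime (BinInt.Z.of_nat p) -> prime p.
Proof.
  move=> Hp. apply/primeP. split.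
  - have := Znumtheory.prime_ge_2 _ Hp. move=> H. apply/ltP. lia.
  - move=> x /dvdnP [k Hk].
    have Hd : BinInt.Z.divide (BinInt.Z.of_nat x) (BinInt.Z.of_nat p).
    { exists (BinInt.Z.of_nat k). rewrite Hk. exact: Znat.Nat2Z.inj_mul. }
    have := Znumtheory.prime_divisors _ Hp _ Hd.
    move=> H. apply/orP.
    have : x = 1 \/ x = p by lia.
    by case=> ->; [left|right].
Qed.

Lemma bridge p alpha a :
  Znumtheory.prime (BinInt.Z.of_nat p) -> PeanoNat.Nat.Odd p -> Peano.lt 1 alpha ->
  PeanoNat.Nat.gcd p alpha = 1 ->
  exists h, Nat.mul 2 h = Nat.add p 1 /\ Peano.le 3 p /\
    Peano.le (S_count alpha p 1 a) a /\
    (Peano.lt (Nat.sub p 1) a -> exists m q, Peano.le 2 q /\ Peano.le q p /\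
        Peano.le (Nat.mul (Nat.mul (Nat.sub q 1) (Nat.sub p 1)) (Nat.pow p m)) a /\
        Peano.le (S_count alpha p 1 a) (Nat.mul (Nat.mul (Nat.sub p 1) (Nat.pow h m)) (Nat.min h q))).
Proof.
  move=> Hpz [k Hk] Ha Hg.
  have pP := prime_of_Z Hpz.
  have po : odd p. { have -> : p = (2 * k).+1 by lia. by rewrite /= oddM. }
  have pa : ~~ (p %| alpha).
  { apply/negP => /dvdnP [c Hc].
    have : PeanoNat.Nat.divide p 1.
    { rewrite -Hg. apply: PeanoNat.Nat.gcd_greatest; first exact: PeanoNat.Nat.divide_refl.
      by exists c. }
    move/PeanoNat.Nat.divide_1_r => E. move: (prime_gt1 pP). by rewrite E. }
  have a1 : 1 < alpha by apply/ltP.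
  exists (h p). split; [|split; [|split]].
  - have := h2 po. rewrite -mul2n. move=> E. lia.
  - apply/leP. exact: p_gt2.
  - apply/leP. apply: (leq_trans (S_le_N pP po pa a1 0 a)).
    rewrite /N (eq_bigr (fun _ => 1)) // sum_nat_const_nat subn0 muln1 //.
  - move=> /ltP da.
    have da' : d p < a by rewrite /d -subn1.
    have [m [q [q2 qp qa Sb]]] := main_comb pP po pa a1 da'.
    exists m, q. split; [|split; [|split]].
    + by apply/leP.
    + by apply/leP.
    + apply/leP. rewrite powE. move: qa; rewrite /M /d subn1 mulnA. lia.
    + apply/leP. apply: (leq_trans (S_le_N pP po pa a1 m.+1 a)). rewrite powE.
      move: Sb. have -> : Nat.sub p 1 = d p by rewrite /d; lia.
      have -> : Nat.min (h p) q = minn (h p) q.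
      { case: (leqP (h p) q) => H.
        - apply: PeanoNat.Nat.min_l. by apply/leP.
        - apply: PeanoNat.Nat.min_r. apply/leP. exact: ltnW. }
      by [].
Qed.

End Comb.

Theorem theorem2p7 (p alpha : nat) :
  prime (Z.of_nat p) -> Nat.Odd p -> (1 < alpha)%nat -> Nat.gcd p alpha = 1%nat ->
  forall a : nat, (1 <= a)%nat ->
    INR (S_count alpha p 1 a) <=
      4 * Rpower (INR a) (ln ((INR p + 1) / 2) / ln (INR p)).
Proof.
  intros Hpz Hodd Halpha Hgcd a Ha.
  destruct (@Comb.bridge p alpha a Hpz Hodd Halpha Hgcd) as [h [Hh [Hp3 [Hsa Hbig]]]].
  assert (HH : (INR p + 1) / 2 = INR h).
  { apply (f_equal INR) in Hh. rewrite mult_INR, plus_INR in Hh. simpl in Hh. lra. }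
  rewrite HH.
  destruct (Compare_dec.le_lt_dec a (p - 1)) as [Hle|Hlt].
  - apply Rle_trans with (INR a). { apply le_INR; auto. }
    apply final_small with (p := p) (h := h); auto; lia.
  - destruct (Hbig Hlt) as [m [q [Hq2 [Hqp [Hqa Hs]]]]].
    apply Rle_trans with (INR ((p - 1) * h ^ m * Nat.min h q)). { apply le_INR; auto. }
    replace (Nat.min h q) with (Nat.min h (q - 1 + 1)) by (f_equal; lia).
    apply final_big with (p := p) (h := h); auto; lia.
Qed.
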